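(* Let $a\geq b>0$, $k\geq 1$, and let $\alpha,\beta,t$ be real numbers with $\alpha+\beta t>0$. Then \[ \frac{ka\gamma-b\gamma}{k}+\frac{b}{k}\ln k + \frac{a-b}{\alpha+\beta t}+a\psi(\alpha+\beta t)-b\psi_k(\alpha+\beta t)\geq 0 . \]
   Context: $\gamma$ denotes the Euler–Mascheroni constant and $\psi(t)=\Gamma'(t)/\Gamma(t)$ is the digamma function for $t>0$, where $\Gamma$ is Euler's Gamma function. For $k>0$ and $t>0$, the $k$-Gamma function is $\Gamma_k(t)=\int_0^\infty e^{-x^k/k}x^{t-1}\,dx$, and $\psi_k(t)=\frac{d}{dt}\ln\Gamma_k(t)=\Gamma_k'(t)/\Gamma_k(t)$. *)

(* Defs.v *)
From Stdlib Require Import Reals.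
From Coquelicot Require Import Coquelicot.
Open Scope R_scope.

Definition euler_gamma : R :=
  real (Lim_seq (fun n : nat => sum_f_R0 (fun i => / INR (S i)) n - ln (INR (S n)))).

Definition Gamma (t : R) : R :=
  RInt_gen (fun x => exp (- x) * Rpower x (t - 1)) (at_right 0) (Rbar_locally p_infty).

Definition psi (t : R) : R := Derive Gamma t / Gamma t.

Definition Gamma_k (k t : R) : R :=
  RInt_gen (fun x => exp (- (Rpower x k) / k) * Rpower x (t - 1))
           (at_right 0) (Rbar_locally p_infty).

Definition psi_k (k t : R) : R := Derive (Gamma_k k) t / Gamma_k k t.

(* Main.v *)
Require Import Defs.
From Stdlib Require Import Reals Lra Lia Psatz Classical.
From Coquelicot Require Import Coquelicot.
Open Scope R_scope.

Definition RL (f : R -> R) (l : R) :=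
  forall eps, 0 < eps -> exists d, 0 < d /\ forall h, 0 < h < d -> Rabs (f h - l) < eps.

Lemma RL_filter f l : RL f l <-> filterlim f (at_right 0) (locally l).
Proof.
  split.
  - intros H. apply filterlim_locally. intros eps.
    destruct (H eps (cond_pos eps)) as [d [Hd Hf]].
    exists (mkposreal d Hd). intros y Hy Hy0. apply Hf. split; auto.
    cbv [ball] in Hy. simpl in Hy. cbv [AbsRing_ball abs minus plus opp] in Hy. simpl in Hy.
    rewrite Ropp_0, Rplus_0_r in Hy. apply Rabs_lt_between in Hy. lra.
  - intros H eps Heps. apply filterlim_locally with (eps := mkposreal eps Heps) in H.
    destruct H as [d Hd]. exists d. split. apply cond_pos. intros h Hh.
    specialize (Hd h). assert (HB : ball 0 d h).
    { cbv [ball]. simpl. cbv [AbsRing_ball abs minus plus opp]. simpl.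
      rewrite Ropp_0, Rplus_0_r. rewrite Rabs_right; lra. }
    specialize (Hd HB ltac:(lra)). exact Hd.
Qed.

Lemma RL_unique f l m : RL f l -> RL f m -> l = m.
Proof.
  intros Hl Hm. destruct (Req_dec l m) as [E|E]; auto.
  assert (He : 0 < Rabs (l - m) / 2).
  { apply Rdiv_lt_0_compat; [apply Rabs_pos_lt; lra | lra]. }
  destruct (Hl _ He) as [d1 [Hd1 H1]]. destruct (Hm _ He) as [d2 [Hd2 H2]].
  set (h := Rmin d1 d2 / 2).
  assert (0 < h < d1). { unfold h. split. apply Rdiv_lt_0_compat; [apply Rmin_pos; lra|lra].
    pose proof (Rmin_l d1 d2). pose proof (Rmin_pos d1 d2 Hd1 Hd2). lra. }
  assert (0 < h < d2). { unfold h. split. apply Rdiv_lt_0_compat; [apply Rmin_pos; lra|lra].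
    pose proof (Rmin_r d1 d2). pose proof (Rmin_pos d1 d2 Hd1 Hd2). lra. }
  specialize (H1 h H). specialize (H2 h H0).
  pose proof (Rabs_triang (f h - m) (l - f h)).
  replace (f h - m + (l - f h)) with (l - m) in H3 by ring.
  rewrite Rabs_minus_sym in H1. lra.
Qed.

Lemma RL_le f g l m : RL f l -> RL g m ->
  (exists d, 0 < d /\ forall h, 0 < h < d -> f h <= g h) -> l <= m.
Proof.
  intros Hl Hm [d0 [Hd0 Hfg]]. destruct (Rle_dec l m) as [E|E]; auto.
  assert (He : 0 < (l - m) / 2) by lra.
  destruct (Hl _ He) as [d1 [Hd1 H1]]. destruct (Hm _ He) as [d2 [Hd2 H2]].
  set (h := Rmin d0 (Rmin d1 d2) / 2).
  pose proof (Rmin_l d0 (Rmin d1 d2)). pose proof (Rmin_r d0 (Rmin d1 d2)).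
  pose proof (Rmin_l d1 d2). pose proof (Rmin_r d1 d2).
  assert (Hp : 0 < Rmin d0 (Rmin d1 d2)) by (repeat apply Rmin_pos; lra).
  assert (0 < h) by (unfold h; lra).
  specialize (H1 h ltac:(unfold h in *; lra)). specialize (H2 h ltac:(unfold h in *; lra)).
  specialize (Hfg h ltac:(unfold h in *; lra)).
  apply Rabs_lt_between in H1. apply Rabs_lt_between in H2. lra.
Qed.

Lemma RL_ext f g l : (exists d, 0 < d /\ forall h, 0 < h < d -> f h = g h) -> RL f l -> RL g l.
Proof.
  intros [d0 [Hd0 E]] H eps Heps. destruct (H eps Heps) as [d [Hd Hf]].
  exists (Rmin d d0). split. apply Rmin_pos; lra.
  intros h Hh. pose proof (Rmin_l d d0). pose proof (Rmin_r d d0).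
  rewrite <- E by lra. apply Hf. lra.
Qed.

Lemma RL_const c : RL (fun _ => c) c.
Proof. intros eps He. exists 1. split. lra. intros. unfold Rminus. rewrite Rplus_opp_r, Rabs_R0. auto. Qed.

Lemma RL_id : RL (fun h => h) 0.
Proof. intros eps He. exists eps. split. auto. intros h Hh. rewrite Rminus_0_r, Rabs_right; lra. Qed.

Lemma RL_plus f g l m : RL f l -> RL g m -> RL (fun h => f h + g h) (l + m).
Proof.
  intros Hf Hg. apply RL_filter in Hf. apply RL_filter in Hg. apply RL_filter.
  eapply filterlim_comp_2; [exact Hf | exact Hg | ].
  apply (filterlim_plus (V := R_NormedModule) l m).
Qed.

Lemma RL_mult f g l m : RL f l -> RL g m -> RL (fun h => f h * g h) (l * m).
Proof.
  intros Hf Hg. apply RL_filter in Hf. apply RL_filter in Hg. apply RL_filter.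
  eapply filterlim_comp_2; [exact Hf | exact Hg | ].
  apply (filterlim_mult (K := R_AbsRing) l m).
Qed.

Lemma RL_scale f l c : 0 < c -> RL f l -> RL (fun h => f (h * c)) l.
Proof.
  intros Hc H eps He. destruct (H eps He) as [d [Hd Hf]].
  exists (d / c). split. apply Rdiv_lt_0_compat; lra.
  intros h Hh. apply Hf. split. apply Rmult_lt_0_compat; lra.
  destruct Hh as [_ Hh]. apply Rmult_lt_compat_r with (r := c) in Hh; auto.
  unfold Rdiv in Hh. rewrite Rmult_assoc, Rinv_l, Rmult_1_r in Hh; lra.
Qed.

Lemma RL_deriv f x l : derivable_pt_lim f x l -> RL (fun h => (f (x + h) - f x) / h) l.
Proof.
  intros H eps He. destruct (H eps He) as [d Hd]. exists d. split. apply cond_pos.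
  intros h Hh. apply Hd. lra. rewrite Rabs_right; lra.
Qed.

Lemma RL_cont f x : continuity_pt f x -> RL (fun h => f (x + h)) (f x).
Proof.
  intros H eps He. destruct (H eps He) as [d [Hd Hf]]. exists d. split. auto.
  intros h Hh. apply (Hf (x + h)). split. split. exact I. lra.
  simpl. unfold Rdist. replace (x + h - x) with h by ring. rewrite Rabs_right; lra.
Qed.

Lemma exp_conv lam X Y : 0 <= lam <= 1 ->
  exp (lam * X + (1 - lam) * Y) <= lam * exp X + (1 - lam) * exp Y.
Proof.
  intros Hl. set (m := lam * X + (1 - lam) * Y).
  assert (E1 : exp X = exp m * exp (X - m)) by (rewrite <- exp_plus; f_equal; ring).
  assert (E2 : exp Y = exp m * exp (Y - m)) by (rewrite <- exp_plus; f_equal; ring).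
  pose proof (exp_ineq1_le (X - m)). pose proof (exp_ineq1_le (Y - m)).
  pose proof (exp_pos m).
  rewrite E1, E2.
  assert (exp m * ((lam * exp (X - m) + (1 - lam) * exp (Y - m))) >= exp m * 1).
  { apply Rle_ge, Rmult_le_compat_l. lra.
    assert (lam * (1 + (X - m)) <= lam * exp (X - m)) by (apply Rmult_le_compat_l; lra).
    assert ((1-lam) * (1 + (Y - m)) <= (1-lam) * exp (Y - m)) by (apply Rmult_le_compat_l; lra).
    unfold m in *. nra. }
  nra.
Qed.

Lemma exp_pow_n s n : exp s ^ n = exp (INR n * s).
Proof.
  induction n. simpl. rewrite Rmult_0_l, exp_0. auto.
  rewrite S_INR, <- tech_pow_Rmult, IHn, <- exp_plus. f_equal. ring.
Qed.

Lemma exp_poly_bound n s : 0 < s -> exp (- s) * s ^ n <= INR n ^ n.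
Proof.
  intros Hs. destruct n as [|n].
  - simpl. rewrite Rmult_1_r. rewrite <- exp_0. apply exp_le_3 || idtac.
    left. apply exp_increasing. lra.
  - set (N := INR (S n)). assert (HN : 0 < N) by (apply lt_0_INR; lia).
    assert (H1 : s / N <= exp (s / N)). { pose proof (exp_ineq1_le (s/N)). lra. }
    assert (H2 : (s / N) ^ (S n) <= exp (s / N) ^ (S n)).
    { apply pow_incr. split. apply Rlt_le, Rdiv_lt_0_compat; lra. auto. }
    rewrite exp_pow_n in H2. fold N in H2.
    replace (N * (s / N)) with s in H2 by (field; lra).
    rewrite Rpow_mult_distr in H2 || idtac.
    unfold Rdiv in H2. rewrite Rpow_mult_distr, pow_inv in H2.
    assert (HNn : 0 < N ^ S n) by (apply pow_lt; lra).
    assert (s ^ S n <= exp s * N ^ S n).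
    { apply Rmult_le_compat_r with (r := N ^ S n) in H2; [|lra].
      rewrite Rmult_assoc, Rinv_l in H2 by lra. lra. }
    rewrite exp_Ropp. apply Rmult_le_reg_l with (r := exp s). apply exp_pos.
    rewrite <- Rmult_assoc, Rinv_r, Rmult_1_l by (apply Rgt_not_eq, exp_pos). lra.
Qed.

Definition IG (f : R -> R) (l : R) :=
  (forall a b, 0 < a -> a <= b -> ex_RInt f a b) /\
  forall eps, 0 < eps -> exists a0 b0, 0 < a0 /\
    forall a b, 0 < a <= a0 -> b0 <= b -> Rabs (RInt f a b - l) < eps.

Lemma IG_gen f l : IG f l -> is_RInt_gen f (at_right 0) (Rbar_locally p_infty) l.
Proof.
  intros [Hex Hl]. unfold is_RInt_gen, filterlimi, filter_le, filtermapi.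
  intros P [eps HP].
  destruct (Hl eps (cond_pos eps)) as [a0 [b0 [Ha0 H]]].
  apply Filter_prod with (Q := fun a => 0 < a <= a0) (R := fun b => Rmax b0 a0 < b).
  - exists (mkposreal a0 Ha0). intros y Hy Hy0. split; auto.
    cbv [ball] in Hy. simpl in Hy. cbv [AbsRing_ball abs minus plus opp] in Hy. simpl in Hy.
    rewrite Ropp_0, Rplus_0_r in Hy. apply Rabs_lt_between in Hy. lra.
  - exists (Rmax b0 a0). auto.
  - intros a b Ha Hb. simpl. exists (RInt f a b).
    pose proof (Rmax_l b0 a0). pose proof (Rmax_r b0 a0).
    split. apply (RInt_correct (V := R_CompleteNormedModule)). apply Hex; lra.
    apply HP. cbv [ball]. simpl. cbv [AbsRing_ball abs minus plus opp]. simpl.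
    apply H; lra.
Qed.

Lemma IG_val f l : IG f l -> RInt_gen f (at_right 0) (Rbar_locally p_infty) = l.
Proof.
  intros H. apply IG_gen in H.
  apply (is_RInt_gen_unique (Fa := at_right 0) (Fb := Rbar_locally p_infty)); auto.
Qed.

Lemma IG_le f g l m : IG f l -> IG g m -> (forall s, 0 < s -> f s <= g s) -> l <= m.
Proof.
  intros [Ef Hf] [Eg Hg] Hfg. destruct (Rle_dec l m) as [E|E]; auto.
  assert (He : 0 < (l - m) / 2) by lra.
  destruct (Hf _ He) as [a1 [b1 [Ha1 H1]]]. destruct (Hg _ He) as [a2 [b2 [Ha2 H2]]].
  pose proof (Rmin_l a1 a2). pose proof (Rmin_r a1 a2). pose proof (Rmin_pos a1 a2 Ha1 Ha2).
  pose proof (Rmax_l (Rmax b1 b2) (Rmin a1 a2)). pose proof (Rmax_r (Rmax b1 b2) (Rmin a1 a2)).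
  pose proof (Rmax_l b1 b2). pose proof (Rmax_r b1 b2).
  set (a := Rmin a1 a2) in *. set (b := Rmax (Rmax b1 b2) a + 1).
  assert (Hb : a <= b /\ b1 <= b /\ b2 <= b) by (unfold b; lra).
  clearbody a b.
  specialize (H1 a b ltac:(lra) ltac:(lra)).
  specialize (H2 a b ltac:(lra) ltac:(lra)).
  assert (RInt f a b <= RInt g a b).
  { apply RInt_le. lra. apply Ef; lra.
    apply Eg; lra. intros x Hx. apply Hfg. lra. }
  apply Rabs_lt_between in H1. apply Rabs_lt_between in H2. lra.
Qed.

Lemma IG_lin f g l m c d : IG f l -> IG g m ->
  IG (fun s => c * f s + d * g s) (c * l + d * m).
Proof.
  intros [Ef Hf] [Eg Hg].
  assert (Ex : forall a b, 0 < a -> a <= b -> ex_RInt (fun s => c * f s + d * g s) a b).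
  { intros a b Ha Hb. apply (ex_RInt_plus (V := R_NormedModule)).
    apply (ex_RInt_scal (V := R_NormedModule)). auto.
    apply (ex_RInt_scal (V := R_NormedModule)). auto. }
  split; auto. intros eps He.
  set (K := Rabs c + Rabs d + 1).
  assert (HK : 0 < K) by (unfold K; pose proof (Rabs_pos c); pose proof (Rabs_pos d); lra).
  assert (He' : 0 < eps / K) by (apply Rdiv_lt_0_compat; lra).
  destruct (Hf _ He') as [a1 [b1 [Ha1 H1]]]. destruct (Hg _ He') as [a2 [b2 [Ha2 H2]]].
  exists (Rmin a1 a2), (Rmax (Rmax b1 b2) (Rmin a1 a2)). split. apply Rmin_pos; auto.
  intros a b Ha Hb.
  pose proof (Rmin_l a1 a2). pose proof (Rmin_r a1 a2).
  pose proof (Rmax_l (Rmax b1 b2) (Rmin a1 a2)). pose proof (Rmax_r (Rmax b1 b2) (Rmin a1 a2)).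
  pose proof (Rmax_l b1 b2). pose proof (Rmax_r b1 b2).
  assert (Eq : RInt (fun s => c * f s + d * g s) a b = c * RInt f a b + d * RInt g a b).
  { rewrite (RInt_plus (V := R_CompleteNormedModule) (fun s => c * f s) (fun s => d * g s)).
    assert (Hs1 : RInt (fun s => c * f s) a b = c * RInt f a b)
      by (apply (RInt_scal (V:=R_CompleteNormedModule) f a b c); apply Ef; lra).
    assert (Hs2 : RInt (fun s => d * g s) a b = d * RInt g a b)
      by (apply (RInt_scal (V:=R_CompleteNormedModule) g a b d); apply Eg; lra).
    simpl. change plus with Rplus. simpl. rewrite Hs1, Hs2. reflexivity.
    apply (ex_RInt_scal (V := R_NormedModule)). apply Ef; lra.
    apply (ex_RInt_scal (V := R_NormedModule)). apply Eg; lra. }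
  rewrite Eq.
  specialize (H1 a b ltac:(lra) ltac:(lra)). specialize (H2 a b ltac:(lra) ltac:(lra)).
  replace (c * RInt f a b + d * RInt g a b - (c * l + d * m))
    with (c * (RInt f a b - l) + d * (RInt g a b - m)) by ring.
  eapply Rle_lt_trans. apply Rabs_triang. rewrite !Rabs_mult.
  assert (Rabs c * Rabs (RInt f a b - l) <= Rabs c * (eps / K))
    by (apply Rmult_le_compat_l; [apply Rabs_pos | lra]).
  assert (Rabs d * Rabs (RInt g a b - m) <= Rabs d * (eps / K))
    by (apply Rmult_le_compat_l; [apply Rabs_pos | lra]).
  assert ((Rabs c + Rabs d) * (eps / K) < eps).
  { assert (HKK : K * (eps / K) = eps) by (field; lra).
    assert (Rabs c + Rabs d < K) by (unfold K; lra).
    rewrite <- HKK at 2. apply Rmult_lt_compat_r; lra. }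
  lra.
Qed.

Lemma IG_ext f g l : (forall s, 0 < s -> f s = g s) -> IG f l -> IG g l.
Proof.
  intros E [Ef Hf]. split.
  - intros a b Ha Hb. apply ex_RInt_ext with f. intros x Hx.
    rewrite Rmin_left, Rmax_right in Hx by lra. apply E. lra. auto.
  - intros eps He. destruct (Hf eps He) as [a0 [b0 [Ha0 H]]].
    exists a0, (Rmax b0 a0). split; auto. intros a b Ha Hb.
    pose proof (Rmax_l b0 a0). pose proof (Rmax_r b0 a0).
    rewrite <- (RInt_ext f). apply H; lra.
    intros x Hx. rewrite Rmin_left, Rmax_right in Hx by lra. apply E. lra.
Qed.

Lemma IG_sup (f : R -> R) M :
  (forall x, 0 < x -> continuous f x) -> (forall x, 0 < x -> 0 <= f x) ->
  (forall a b, 0 < a -> a <= b -> RInt f a b <= M) ->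
  exists l, IG f l /\ (forall a b, 0 < a -> a <= b -> RInt f a b <= l).
Proof.
  intros Hc Hp HM.
  assert (Ex : forall a b, 0 < a -> a <= b -> ex_RInt f a b).
  { intros a b Ha Hb. apply (ex_RInt_continuous (V := R_CompleteNormedModule)). intros z Hz.
    rewrite Rmin_left in Hz by lra. apply Hc. lra. }
  set (E := fun y => exists a b, 0 < a /\ a <= b /\ y = RInt f a b).
  assert (Hbd : bound E). { exists M. intros y [a [b [Ha [Hab ->]]]]. apply HM; auto. }
  assert (Hne : exists y, E y). { exists (RInt f 1 1). exists 1, 1. repeat split; lra. }
  destruct (completeness E Hbd Hne) as [l [Hub Hlub]].
  exists l. split; [split|].
  - exact Ex.
  - intros eps He.
    assert (exists y, E y /\ l - eps < y).
    { apply NNPP. intros Hn. assert (is_upper_bound E (l - eps)).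
      { intros y Hy. destruct (Rle_dec y (l - eps)); auto. exfalso. apply Hn. exists y. split; auto. lra. }
      specialize (Hlub _ H). lra. }
    destruct H as [y [[a0 [b0 [Ha0 [Hab0 ->]]]] Hy]].
    exists a0, b0. split; auto. intros a b Ha Hb.
    assert (Hup : RInt f a b <= l). { apply Hub. exists a, b. repeat split; lra. }
    assert (Hlo : RInt f a0 b0 <= RInt f a b).
    { rewrite <- (RInt_Chasles (V := R_CompleteNormedModule) f a a0 b) by (apply Ex; lra).
      rewrite <- (RInt_Chasles (V := R_CompleteNormedModule) f a0 b0 b) by (apply Ex; lra).
      simpl. change plus with Rplus.
      assert (0 <= RInt f a a0) by (apply RInt_ge_0; [lra | apply Ex; lra | intros; apply Hp; lra]).
      assert (0 <= RInt f b0 b) by (apply RInt_ge_0; [lra | apply Ex; lra | intros; apply Hp; lra]).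
      simpl. lra. }
    apply Rabs_lt_between. lra.
  - intros a b Ha Hab. apply Hub. exists a, b. repeat split; lra.
Qed.

Lemma Rpower_pos x y : 0 < Rpower x y.
Proof. unfold Rpower. apply exp_pos. Qed.

Lemma Rpower_m1 s c : 0 < s -> Rpower s (c - 1) = Rpower s c / s.
Proof.
  intros Hs. unfold Rminus. rewrite Rpower_plus, Rpower_Ropp, Rpower_1 by auto. reflexivity.
Qed.


Lemma is_derive_Rpower s c : 0 < s -> is_derive (fun s => Rpower s c) s (c * Rpower s (c - 1)).
Proof.
  intros Hs. rewrite Rpower_m1 by auto. unfold Rpower.
  auto_derive. auto. field. lra.
Qed.

Lemma cont_Rpower s c : 0 < s -> continuous (fun s => Rpower s c) s.
Proof. intros Hs. apply (ex_derive_continuous (K := R_AbsRing) (V := R_NormedModule)). eexists. apply is_derive_Rpower; auto. Qed.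

Definition gf (t s : R) := exp (- s) * Rpower s (t - 1).

Lemma gf_pos t s : 0 < gf t s.
Proof. unfold gf. apply Rmult_lt_0_compat. apply exp_pos. apply Rpower_pos. Qed.

Lemma gf_cont t s : 0 < s -> continuous (gf t) s.
Proof.
  intros Hs. unfold gf. apply (continuous_mult (K := R_AbsRing)).
  apply (ex_derive_continuous (K := R_AbsRing) (V := R_NormedModule)). auto_derive. auto.
  apply cont_Rpower; auto.
Qed.

Lemma nat_above x : exists n : nat, x <= INR n /\ (1 <= n)%nat.
Proof.
  destruct (INR_archimed 1 x ltac:(lra)) as [n Hn]. exists (S n). split.
  rewrite S_INR. lra. lia.
Qed.

Lemma ex_RInt_Rpower a b c : 0 < a -> a <= b -> ex_RInt (fun s => Rpower s c) a b.
Proof.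
  intros Ha Hb. apply (ex_RInt_continuous (V := R_CompleteNormedModule)). intros z Hz.
  rewrite Rmin_left in Hz by lra. apply cont_Rpower. lra.
Qed.

Lemma ex_RInt_gf t a b : 0 < a -> a <= b -> ex_RInt (gf t) a b.
Proof.
  intros Ha Hb. apply (ex_RInt_continuous (V := R_CompleteNormedModule)). intros z Hz.
  rewrite Rmin_left in Hz by lra. apply gf_cont. lra.
Qed.

Lemma exp_neg_le1 s : 0 <= s -> exp (- s) <= 1.
Proof. intros. rewrite <- exp_0. destruct H. left. apply exp_increasing. lra. subst. rewrite Ropp_0. lra. Qed.

Lemma gf_bound_big t n s : 0 < t -> t + 1 <= INR n -> 1 <= s -> gf t s <= INR n ^ n / s ^ 2.
Proof.
  intros Ht Hn Hs. unfold gf.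
  assert (E : Rpower s (t - 1) = Rpower s (t + 1) / s ^ 2).
  { replace (t + 1) with ((t - 1) + INR 2) by (simpl; ring). rewrite Rpower_plus, Rpower_pow by lra.
    field. lra. }
  rewrite E. pose proof (Rle_Rpower s (t+1) (INR n) Hs Hn). rewrite Rpower_pow in H by lra.
  pose proof (exp_poly_bound n s ltac:(lra)).
  assert (0 < s ^ 2) by (apply pow_lt; lra).
  unfold Rdiv. rewrite <- Rmult_assoc. apply Rmult_le_compat_r. left. apply Rinv_0_lt_compat; auto.
  eapply Rle_trans; [|exact H0]. apply Rmult_le_compat_l. left; apply exp_pos. auto.
Qed.

Lemma RInt_Rpower_01 t a : 0 < t -> 0 < a -> a <= 1 -> RInt (fun s => Rpower s (t - 1)) a 1 <= 1 / t.
Proof.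
  intros Ht Ha Ha1.
  assert (H : is_RInt (fun s => Rpower s (t - 1)) a 1 (minus (Rpower 1 t / t) (Rpower a t / t))).
  { apply (is_RInt_derive (V := R_CompleteNormedModule) (fun s => Rpower s t / t)).
    - intros x Hx. rewrite Rmin_left, Rmax_right in Hx by lra.
      rewrite Rpower_m1 by lra. unfold Rpower. auto_derive. lra. field. split; lra.
    - intros x Hx. rewrite Rmin_left, Rmax_right in Hx by lra. apply cont_Rpower. lra. }
  apply (is_RInt_unique (V := R_CompleteNormedModule)) in H. rewrite H. unfold minus, plus, opp. simpl.
  replace (Rpower 1 t) with 1 by (unfold Rpower; rewrite ln_1, Rmult_0_r, exp_0; auto).
  pose proof (Rpower_pos a t). assert (0 < Rpower a t / t) by (apply Rdiv_lt_0_compat; lra). lra.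
Qed.

Lemma RInt_inv2 C b : 0 <= C -> 1 <= b -> RInt (fun s => C / s ^ 2) 1 b <= C.
Proof.
  intros HC Hb.
  assert (H : is_RInt (fun s => C / s ^ 2) 1 b (minus (- C / b) (- C / 1))).
  { apply (is_RInt_derive (V := R_CompleteNormedModule) (fun s => - C / s)).
    - intros x Hx. rewrite Rmin_left, Rmax_right in Hx by lra.
      auto_derive. lra. field. lra.
    - intros x Hx. rewrite Rmin_left, Rmax_right in Hx by lra.
      apply (ex_derive_continuous (K := R_AbsRing) (V := R_NormedModule)). auto_derive. apply Rgt_not_eq. nra. }
  apply (is_RInt_unique (V := R_CompleteNormedModule)) in H. rewrite H. unfold minus, plus, opp. simpl.
  assert (0 <= C / b) by (apply Rdiv_le_0_compat; lra). unfold Rdiv in *. lra.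
Qed.

Lemma gf_int_bound t : 0 < t -> exists M, forall a b, 0 < a -> a <= b -> RInt (gf t) a b <= M.
Proof.
  intros Ht. destruct (nat_above (t + 1)) as [n [Hn _]].
  set (C := INR n ^ n). assert (HC : 0 <= C) by (apply pow_le, pos_INR).
  exists (1 / t + C). intros a b Ha Hab.
  set (a' := Rmin a 1). set (b' := Rmax b 1).
  pose proof (Rmin_l a 1). pose proof (Rmin_r a 1). pose proof (Rmax_l b 1). pose proof (Rmax_r b 1).
  assert (Ha' : 0 < a') by (apply Rmin_pos; lra).
  fold a' b' in H, H0, H1, H2.
  assert (E1 : RInt (gf t) a b <= RInt (gf t) a' b').
  { rewrite <- (RInt_Chasles (V := R_CompleteNormedModule) (gf t) a' a b') by (apply ex_RInt_gf; lra).
    rewrite <- (RInt_Chasles (V := R_CompleteNormedModule) (gf t) a b b') by (apply ex_RInt_gf; lra).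
    simpl. change plus with Rplus. simpl.
    assert (0 <= RInt (gf t) a' a) by (apply RInt_ge_0; [lra | apply ex_RInt_gf; lra | intros; left; apply gf_pos]).
    assert (0 <= RInt (gf t) b b') by (apply RInt_ge_0; [lra | apply ex_RInt_gf; lra | intros; left; apply gf_pos]).
    lra. }
  assert (E2 : RInt (gf t) a' b' = RInt (gf t) a' 1 + RInt (gf t) 1 b').
  { rewrite <- (RInt_Chasles (V := R_CompleteNormedModule) (gf t) a' 1 b') by (apply ex_RInt_gf; lra).
    reflexivity. }
  assert (E3 : RInt (gf t) a' 1 <= 1 / t).
  { eapply Rle_trans; [| apply (RInt_Rpower_01 t a'); lra].
    apply RInt_le. lra. apply ex_RInt_gf; lra. apply ex_RInt_Rpower; lra.
    intros x Hx. unfold gf. pose proof (exp_neg_le1 x ltac:(lra)). pose proof (Rpower_pos x (t-1)).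
    nra. }
  assert (E4 : RInt (gf t) 1 b' <= C).
  { eapply Rle_trans; [| apply (RInt_inv2 C b'); lra].
    apply RInt_le. lra. apply ex_RInt_gf; lra.
    apply (ex_RInt_continuous (V := R_CompleteNormedModule)). intros z Hz.
    rewrite Rmin_left in Hz by lra.
    apply (ex_derive_continuous (K := R_AbsRing) (V := R_NormedModule)). auto_derive. apply Rgt_not_eq. nra.
    intros x Hx. apply gf_bound_big; lra. }
  lra.
Qed.

Lemma Gamma_IG t : 0 < t -> IG (gf t) (Gamma t) /\ 0 < Gamma t.
Proof.
  intros Ht. destruct (gf_int_bound t Ht) as [M HM].
  destruct (IG_sup (gf t) M (gf_cont t) (fun x _ => Rlt_le _ _ (gf_pos t x)) HM) as [l [Hl Hsup]].
  assert (E : Gamma t = l).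
  { unfold Gamma. rewrite <- (IG_val (gf t) l Hl). reflexivity. }
  rewrite E. split; auto.
  eapply Rlt_le_trans; [| apply (Hsup 1 2); lra].
  apply RInt_gt_0. lra. intros; apply gf_pos. intros x Hx. apply gf_cont. lra.
Qed.

Lemma IG_unique f l m : IG f l -> IG f m -> l = m.
Proof.
  intros H1 H2. apply Rle_antisym; eapply IG_le; eauto; intros; lra.
Qed.

Lemma Gamma_val t l : 0 < t -> IG (gf t) l -> Gamma t = l.
Proof. intros Ht H. destruct (Gamma_IG t Ht) as [H1 _]. eapply IG_unique; eauto. Qed.

Lemma Gamma_1 : Gamma 1 = 1.
Proof.
  apply Gamma_val. lra.
  assert (Hd : forall a b, 0 < a -> a <= b -> is_RInt (gf 1) a b (exp (- a) - exp (- b))).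
  { intros a b Ha Hab.
    assert (H : is_RInt (gf 1) a b (minus (- exp (- b)) (- exp (- a)))).
    { apply (is_RInt_derive (V := R_CompleteNormedModule) (fun s => - exp (- s))).
      - intros x Hx. rewrite Rmin_left, Rmax_right in Hx by lra.
        unfold gf. replace (1 - 1) with 0 by ring. rewrite Rpower_O by lra.
        auto_derive. auto. ring.
      - intros x Hx. rewrite Rmin_left, Rmax_right in Hx by lra. apply gf_cont. lra. }
    unfold minus, plus, opp in H. simpl in H. replace (exp (- a) - exp (- b)) with (- exp (- b) + - - exp (- a)) by ring.
    exact H. }
  split.
  - intros a b Ha Hab. eexists. apply Hd; auto.
  - intros eps He. exists (Rmin (eps / 3) 1), (Rmax (3 / eps) 1). split. apply Rmin_pos; lra.
    intros a b Ha Hb.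
    pose proof (Rmin_l (eps/3) 1). pose proof (Rmin_r (eps/3) 1).
    pose proof (Rmax_l (3/eps) 1). pose proof (Rmax_r (3/eps) 1).
    assert (Hb0 : 0 < 3 / eps) by (apply Rdiv_lt_0_compat; lra).
    assert (Hab : a <= b) by lra.
    assert (Hb' : 3 / eps <= b) by lra.
    assert (Ha' : 0 < a <= eps / 3) by lra. clear Ha Hb. rename Ha' into Ha. rename Hb' into Hb.
    rewrite (is_RInt_unique (V := R_CompleteNormedModule) _ _ _ _ (Hd a b (proj1 Ha) Hab)).
    pose proof (exp_ineq1_le (- a)). pose proof (exp_ineq1_le b).
    assert (exp (- b) < eps / 3).
    { rewrite exp_Ropp. assert (0 < b) by lra.
      assert (/ exp b < / b). { apply Rinv_lt_contravar. nra. lra. }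
      assert (Hq : / b <= / (3 / eps)). { apply Rinv_le_contravar; lra. }
      rewrite Rinv_div in Hq. lra. }
    pose proof (exp_pos (- b)). pose proof (exp_neg_le1 a ltac:(lra)).
    apply Rabs_lt_between. lra.
Qed.

Lemma Rpower_small x eps : 0 < x -> 0 < eps -> forall a, 0 < a <= Rpower eps (/ x) -> Rpower a x <= eps.
Proof.
  intros Hx He a Ha. eapply Rle_trans. apply Rle_Rpower_l. lra. exact Ha.
  rewrite Rpower_mult, Rinv_l, Rpower_1 by lra. lra.
Qed.

Lemma B_big x : 0 < x -> exists K, 0 < K /\ forall b, 1 <= b -> exp (- b) * Rpower b x <= K / b.
Proof.
  intros Hx. destruct (nat_above x) as [m [Hm _]].
  exists (INR (S m) ^ (S m)). split. apply pow_lt. apply lt_0_INR. lia.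
  intros b Hb. pose proof (exp_poly_bound (S m) b ltac:(lra)).
  pose proof (Rle_Rpower b x (INR m) Hb Hm). rewrite Rpower_pow in H0 by lra.
  assert (exp (- b) * b ^ m = exp (- b) * b ^ S m / b) by (simpl; field; lra).
  assert (exp (- b) * Rpower b x <= exp (- b) * b ^ m) by (apply Rmult_le_compat_l; [left; apply exp_pos | auto]).
  rewrite H1 in H2. eapply Rle_trans. exact H2. unfold Rdiv. apply Rmult_le_compat_r.
  left. apply Rinv_0_lt_compat. lra. auto.
Qed.

Lemma Gamma_rec x : 0 < x -> Gamma (x + 1) = x * Gamma x.
Proof.
  intros Hx.
  set (B := fun s => exp (- s) * Rpower s x).
  set (h := fun s => gf (x + 1) s - x * gf x s).
  assert (Hd : forall a b, 0 < a -> a <= b -> is_RInt h a b (B a - B b)).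
  { intros a b Ha Hab.
    assert (H : is_RInt h a b (minus (- B b) (- B a))).
    { apply (is_RInt_derive (V := R_CompleteNormedModule) (fun s => - B s)).
      - intros y Hy. rewrite Rmin_left, Rmax_right in Hy by lra.
        unfold h, B, gf. replace (x + 1 - 1) with x by ring. rewrite Rpower_m1 by lra.
        unfold Rpower. auto_derive. lra. field. lra.
      - intros y Hy. rewrite Rmin_left, Rmax_right in Hy by lra. unfold h.
        apply (continuous_minus (V := R_NormedModule)). apply gf_cont. lra.
        apply (continuous_scal_r (K := R_AbsRing) (V := R_NormedModule) x (gf x)). apply gf_cont. lra. }
    unfold minus, plus, opp in H. simpl in H. replace (B a - B b) with (- B b + - - B a) by ring.
    exact H. }
  assert (IGh : IG h 0).
  { split.
    - intros a b Ha Hab. eexists. apply Hd; auto.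
    - intros eps He. destruct (B_big x Hx) as [K [HK HB]].
      set (a0 := Rmin 1 (Rpower (eps / 4) (/ x))).
      set (b0 := Rmax 1 (4 * K / eps + 1)).
      exists a0, b0. split. apply Rmin_pos. lra. apply Rpower_pos.
      intros a b Ha Hb.
      pose proof (Rmin_l 1 (Rpower (eps / 4) (/ x))). pose proof (Rmin_r 1 (Rpower (eps / 4) (/ x))).
      pose proof (Rmax_l 1 (4 * K / eps + 1)). pose proof (Rmax_r 1 (4 * K / eps + 1)).
      fold a0 b0 in H, H0, H1, H2.
      rewrite (is_RInt_unique (V := R_CompleteNormedModule) _ _ _ _ (Hd a b ltac:(lra) ltac:(lra))).
      assert (HBa : 0 < B a <= eps / 4).
      { unfold B. split. apply Rmult_lt_0_compat. apply exp_pos. apply Rpower_pos.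
        pose proof (exp_neg_le1 a ltac:(lra)). pose proof (Rpower_pos a x).
        pose proof (Rpower_small x (eps/4) Hx ltac:(lra) a ltac:(lra)). nra. }
      assert (HBb : 0 < B b < eps / 2).
      { unfold B. split. apply Rmult_lt_0_compat. apply exp_pos. apply Rpower_pos.
        eapply Rle_lt_trans. apply HB. lra.
        assert (4 * K / eps < b) by lra.
        apply Rmult_lt_reg_r with b. lra. unfold Rdiv. rewrite Rmult_assoc, Rinv_l, Rmult_1_r by lra.
        apply Rmult_lt_compat_r with (r := eps) in H3; [|lra].
        unfold Rdiv in H3. rewrite Rmult_assoc, Rinv_l, Rmult_1_r in H3 by lra. nra. }
      rewrite Rminus_0_r. apply Rabs_lt_between. lra. }
  destruct (Gamma_IG x Hx) as [IGx _].
  apply Gamma_val. lra.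
  replace (x * Gamma x) with (1 * 0 + x * Gamma x) by ring.
  apply (IG_ext (fun s => 1 * h s + x * gf x s)). intros s _. unfold h. ring.
  apply IG_lin; auto.
Qed.

Lemma gf_exp t s : 0 < s -> gf t s = exp (- s + (t - 1) * ln s).
Proof. intros. unfold gf, Rpower. rewrite exp_plus. reflexivity. Qed.

Lemma Gamma_logconv u v lam : 0 < u -> 0 < v -> 0 <= lam <= 1 ->
  Gamma (lam * u + (1 - lam) * v) <= exp (lam * ln (Gamma u) + (1 - lam) * ln (Gamma v)).
Proof.
  intros Hu Hv Hl.
  destruct (Gamma_IG u Hu) as [IGu Au]. destruct (Gamma_IG v Hv) as [IGv Av].
  set (w := lam * u + (1 - lam) * v).
  assert (Hw : 0 < w).
  { unfold w. destruct (Rle_dec lam 0). assert (lam = 0) by lra. subst. lra.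
    assert (0 < lam * u) by (apply Rmult_lt_0_compat; lra). assert (0 <= (1-lam) * v) by nra. lra. }
  destruct (Gamma_IG w Hw) as [IGw Aw].
  set (A := Gamma u) in *. set (B := Gamma v) in *.
  set (K := exp (lam * ln A + (1 - lam) * ln B)).
  assert (HK : 0 < K) by apply exp_pos.
  assert (Hlim : IG (fun s => (K * lam / A) * gf u s + (K * (1 - lam) / B) * gf v s)
                    ((K * lam / A) * A + (K * (1 - lam) / B) * B)) by (apply IG_lin; auto).
  replace ((K * lam / A) * A + (K * (1 - lam) / B) * B) with K in Hlim by (field; lra).
  apply (IG_le _ _ _ _ IGw Hlim).
  intros s Hs. rewrite !gf_exp by auto.
  set (X := - s + (u - 1) * ln s - ln A). set (Y := - s + (v - 1) * ln s - ln B).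
  assert (E : - s + (w - 1) * ln s = (lam * ln A + (1 - lam) * ln B) + (lam * X + (1 - lam) * Y))
    by (unfold X, Y, w; ring).
  rewrite E, exp_plus. fold K.
  assert (EX : exp (- s + (u - 1) * ln s) = A * exp X).
  { unfold X. replace (- s + (u - 1) * ln s) with (ln A + (- s + (u - 1) * ln s - ln A)) at 1 by ring.
    rewrite exp_plus, exp_ln by auto. reflexivity. }
  assert (EY : exp (- s + (v - 1) * ln s) = B * exp Y).
  { unfold Y. replace (- s + (v - 1) * ln s) with (ln B + (- s + (v - 1) * ln s - ln B)) at 1 by ring.
    rewrite exp_plus, exp_ln by auto. reflexivity. }
  rewrite EX, EY. pose proof (exp_conv lam X Y Hl).
  replace (K * lam / A * (A * exp X) + K * (1 - lam) / B * (B * exp Y))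
    with (K * (lam * exp X + (1 - lam) * exp Y)) by (field; lra).
  apply Rmult_le_compat_l; lra.
Qed.

Lemma conv3 (F : R -> R) :
  (forall u v lam, 0 < u -> 0 < v -> 0 <= lam <= 1 -> F (lam * u + (1 - lam) * v) <= lam * F u + (1 - lam) * F v) ->
  forall p q r, 0 < p -> p < q -> q < r -> (F q - F p) * (r - p) <= (F r - F p) * (q - p).
Proof.
  intros HF p q r Hp Hpq Hqr.
  set (lam := (r - q) / (r - p)).
  assert (Hl : 0 <= lam <= 1).
  { unfold lam. split. apply Rdiv_le_0_compat; lra.
    apply Rmult_le_reg_r with (r - p). lra. unfold Rdiv. rewrite Rmult_assoc, Rinv_l by lra. lra. }
  specialize (HF p r lam Hp ltac:(lra) Hl).
  replace (lam * p + (1 - lam) * r) with q in HF by (unfold lam; field; lra).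
  assert (E : (F r - F p) * (q - p) - (F q - F p) * (r - p) = (r - p) * (lam * F p + (1 - lam) * F r - F q)).
  { unfold lam. field. lra. }
  assert (0 <= (r - p) * (lam * F p + (1 - lam) * F r - F q)) by (apply Rmult_le_pos; lra).
  lra.
Qed.

Lemma L_conv u v lam : 0 < u -> 0 < v -> 0 <= lam <= 1 ->
  ln (Gamma (lam * u + (1 - lam) * v)) <= lam * ln (Gamma u) + (1 - lam) * ln (Gamma v).
Proof.
  intros Hu Hv Hl. pose proof (Gamma_logconv u v lam Hu Hv Hl).
  assert (Hw : 0 < lam * u + (1 - lam) * v).
  { destruct (Rle_dec lam 0). assert (lam = 0) by lra. subst. lra.
    assert (0 < lam * u) by (apply Rmult_lt_0_compat; lra). assert (0 <= (1-lam) * v) by nra. lra. }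
  destruct (Gamma_IG _ Hw) as [_ Hp].
  rewrite <- (ln_exp (lam * ln (Gamma u) + (1 - lam) * ln (Gamma v))).
  destruct H. left. apply ln_increasing; auto. rewrite H. lra.
Qed.

Lemma G_conv u v lam : 0 < u -> 0 < v -> 0 <= lam <= 1 ->
  Gamma (lam * u + (1 - lam) * v) <= lam * Gamma u + (1 - lam) * Gamma v.
Proof.
  intros Hu Hv Hl. pose proof (Gamma_logconv u v lam Hu Hv Hl).
  destruct (Gamma_IG u Hu) as [_ Au]. destruct (Gamma_IG v Hv) as [_ Av].
  pose proof (exp_conv lam (ln (Gamma u)) (ln (Gamma v)) Hl). rewrite !exp_ln in H0 by auto. lra.
Qed.

Lemma L3 p q r : 0 < p -> p < q -> q < r ->
  (ln (Gamma q) - ln (Gamma p)) * (r - p) <= (ln (Gamma r) - ln (Gamma p)) * (q - p).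
Proof. apply (conv3 (fun x => ln (Gamma x))). apply L_conv. Qed.

Lemma G3 p q r : 0 < p -> p < q -> q < r ->
  (Gamma q - Gamma p) * (r - p) <= (Gamma r - Gamma p) * (q - p).
Proof. apply (conv3 Gamma). apply G_conv. Qed.

Lemma Derive_RL f x D : RL (fun h => (f (x + h) - f x) / h) D -> Derive f x = D.
Proof.
  intros H. unfold Derive, Lim.
  assert (Hs : is_lim_seq (fun n => (f (x + Rbar_loc_seq 0 n) - f x) / Rbar_loc_seq 0 n) D).
  { apply is_lim_seq_spec. intros eps. destruct (H eps (cond_pos eps)) as [d [Hd Hf]].
    destruct (INR_archimed d 1 Hd) as [N HN]. exists N. intros n Hn.
    apply Hf. simpl. rewrite Rplus_0_l. split. apply Rinv_0_lt_compat. pose proof (pos_INR n). lra.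
    apply le_INR in Hn. assert (0 < INR n + 1) by (pose proof (pos_INR n); lra).
    apply Rmult_lt_reg_r with (INR n + 1). lra. rewrite Rinv_l by lra. nra. }
  apply is_lim_seq_unique in Hs. rewrite Hs. reflexivity.
Qed.

Definition Qg x h := (Gamma (x + h) - Gamma x) / h.

Lemma Q_mono x h1 h2 : 0 < x -> 0 < h1 -> h1 < h2 -> Qg x h1 <= Qg x h2.
Proof.
  intros Hx H1 H2. pose proof (G3 x (x + h1) (x + h2) Hx ltac:(lra) ltac:(lra)).
  unfold Qg. replace (x + h2 - x) with h2 in H by ring. replace (x + h1 - x) with h1 in H by ring.
  apply Rmult_le_reg_r with (h1 * h2). nra.
  replace ((Gamma (x + h1) - Gamma x) / h1 * (h1 * h2)) with ((Gamma (x + h1) - Gamma x) * h2) by (field; lra).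
  replace ((Gamma (x + h2) - Gamma x) / h2 * (h1 * h2)) with ((Gamma (x + h2) - Gamma x) * h1) by (field; lra).
  auto.
Qed.

Lemma Q_lower x h : 0 < x -> 0 < h -> (Gamma x - Gamma (x / 2)) / (x / 2) <= Qg x h.
Proof.
  intros Hx Hh. pose proof (G3 (x / 2) x (x + h) ltac:(lra) ltac:(lra) ltac:(lra)).
  unfold Qg.
  assert ((Gamma x - Gamma (x / 2)) * h <= (Gamma (x + h) - Gamma x) * (x / 2)) by nra.
  apply Rmult_le_reg_r with (h * (x / 2)). nra.
  replace ((Gamma x - Gamma (x / 2)) / (x / 2) * (h * (x / 2))) with ((Gamma x - Gamma (x / 2)) * h) by (field; lra).
  replace ((Gamma (x + h) - Gamma x) / h * (h * (x / 2))) with ((Gamma (x + h) - Gamma x) * (x / 2)) by (field; lra).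
  auto.
Qed.

Lemma DG x : 0 < x -> exists D, RL (Qg x) D.
Proof.
  intros Hx.
  set (lo := (Gamma x - Gamma (x / 2)) / (x / 2)).
  set (E := fun y => exists h, 0 < h < 1 /\ y = - Qg x h).
  assert (Hb : bound E). { exists (- lo). intros y [h [Hh ->]]. pose proof (Q_lower x h Hx ltac:(lra)). fold lo in H. lra. }
  assert (Hne : exists y, E y). { exists (- Qg x (1/2)). exists (1/2). split; auto; lra. }
  destruct (completeness E Hb Hne) as [m [Hub Hlub]].
  exists (- m). intros eps He.
  assert (exists h, 0 < h < 1 /\ m - eps < - Qg x h).
  { apply NNPP. intros Hn. assert (is_upper_bound E (m - eps)).
    { intros y [h [Hh ->]]. destruct (Rle_dec (- Qg x h) (m - eps)); auto. exfalso. apply Hn. exists h. split; auto. lra. }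
    specialize (Hlub _ H). lra. }
  destruct H as [h0 [Hh0 Hq]]. exists h0. split. lra.
  intros h Hh. assert (Hup : - Qg x h <= m) by (apply Hub; exists h; split; auto; lra).
  pose proof (Q_mono x h h0 Hx ltac:(lra) ltac:(lra)).
  apply Rabs_lt_between. lra.
Qed.

Lemma RL_expS S : RL (fun h => (exp (h * S) - 1) / h) S.
Proof.
  assert (H : derivable_pt_lim (fun h => exp (h * S)) 0 S).
  { apply is_derive_Reals. evar (l : R). assert (is_derive (fun h => exp (h * S)) 0 l).
    { unfold l. auto_derive. auto. reflexivity. }
    unfold l in H. rewrite Rmult_0_l, exp_0, Rmult_1_l, Rmult_1_r in H. exact H. }
  apply RL_deriv in H. eapply RL_ext; [| exact H].
  exists 1. split. lra. intros h Hh. rewrite Rplus_0_l, Rmult_0_l, exp_0. reflexivity.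
Qed.

Lemma psi_char x : 0 < x -> exists D, RL (Qg x) D /\ psi x = D / Gamma x.
Proof.
  intros Hx. destruct (DG x Hx) as [D HD]. exists D. split; auto.
  unfold psi. rewrite (Derive_RL Gamma x D HD). reflexivity.
Qed.

Lemma psi_upper x v : 0 < x -> x < v -> psi x <= (ln (Gamma v) - ln (Gamma x)) / (v - x).
Proof.
  intros Hx Hv. destruct (psi_char x Hx) as [D [HD ->]].
  destruct (Gamma_IG x Hx) as [_ Gx].
  set (S := (ln (Gamma v) - ln (Gamma x)) / (v - x)).
  assert (D <= Gamma x * S).
  { apply (RL_le (Qg x) (fun h => Gamma x * ((exp (h * S) - 1) / h))). auto.
    apply RL_mult. apply RL_const. apply RL_expS.
    exists (v - x). split. lra. intros h Hh.
    pose proof (L3 x (x + h) v Hx ltac:(lra) ltac:(lra)).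
    replace (x + h - x) with h in H by ring.
    assert (HL : ln (Gamma (x + h)) <= ln (Gamma x) + h * S).
    { unfold S. apply Rmult_le_reg_r with (v - x). lra.
      replace ((ln (Gamma x) + h * ((ln (Gamma v) - ln (Gamma x)) / (v - x))) * (v - x))
        with (ln (Gamma x) * (v - x) + h * (ln (Gamma v) - ln (Gamma x))) by (field; lra). nra. }
    destruct (Gamma_IG (x + h) ltac:(lra)) as [_ Gxh].
    assert (Gamma (x + h) <= Gamma x * exp (h * S)).
    { rewrite <- (exp_ln (Gamma (x + h))), <- (exp_ln (Gamma x)) at 1 by auto.
      rewrite <- exp_plus. destruct HL. left. apply exp_increasing. lra. rewrite H0. lra. }
    unfold Qg. unfold Rdiv. rewrite <- Rmult_assoc. apply Rmult_le_compat_r.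
    left. apply Rinv_0_lt_compat. lra. lra. }
  apply Rmult_le_reg_r with (Gamma x). auto.
  unfold Rdiv. rewrite Rmult_assoc, Rinv_l by lra. lra.
Qed.

Lemma psi_lower w x : 0 < w -> w < x -> (ln (Gamma x) - ln (Gamma w)) / (x - w) <= psi x.
Proof.
  intros Hw Hx. assert (Hx0 : 0 < x) by lra. destruct (psi_char x Hx0) as [D [HD ->]].
  destruct (Gamma_IG x Hx0) as [_ Gx].
  set (S := (ln (Gamma x) - ln (Gamma w)) / (x - w)).
  assert (Gamma x * S <= D).
  { apply (RL_le (fun h => Gamma x * ((exp (h * S) - 1) / h)) (Qg x)); auto.
    apply RL_mult. apply RL_const. apply RL_expS.
    exists 1. split. lra. intros h Hh.
    pose proof (L3 w x (x + h) Hw Hx ltac:(lra)).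
    assert (HL : ln (Gamma x) + h * S <= ln (Gamma (x + h))).
    { unfold S. apply Rmult_le_reg_r with (x - w). lra.
      replace ((ln (Gamma x) + h * ((ln (Gamma x) - ln (Gamma w)) / (x - w))) * (x - w))
        with (ln (Gamma x) * (x - w) + h * (ln (Gamma x) - ln (Gamma w))) by (field; lra). nra. }
    destruct (Gamma_IG (x + h) ltac:(lra)) as [_ Gxh].
    assert (Gamma x * exp (h * S) <= Gamma (x + h)).
    { rewrite <- (exp_ln (Gamma (x + h))), <- (exp_ln (Gamma x)) at 1 by auto.
      rewrite <- exp_plus. destruct HL. left. apply exp_increasing. lra. rewrite H0. lra. }
    unfold Qg. unfold Rdiv. rewrite <- Rmult_assoc. apply Rmult_le_compat_r.
    left. apply Rinv_0_lt_compat. lra. lra. }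
  apply Rmult_le_reg_r with (Gamma x). auto.
  unfold Rdiv. rewrite Rmult_assoc, Rinv_l by lra. lra.
Qed.

Lemma psi_mono u v : 0 < u -> u <= v -> psi u <= psi v.
Proof.
  intros Hu Huv. destruct Huv as [H|H]. 2: subst; lra.
  eapply Rle_trans. apply (psi_upper u v); auto. apply psi_lower; auto.
Qed.

Lemma psi_rec z : 0 < z -> psi (z + 1) = psi z + / z.
Proof.
  intros Hz. destruct (psi_char z Hz) as [D [HD Hp]]. destruct (psi_char (z + 1) ltac:(lra)) as [D1 [HD1 Hp1]].
  destruct (Gamma_IG z Hz) as [_ Gz].
  assert (HR : RL (Qg (z + 1)) (Gamma z + 0 * D + z * D)).
  { apply (RL_ext (fun h => Gamma z + h * Qg z h + z * Qg z h)).
    exists 1. split. lra. intros h Hh. unfold Qg.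
    replace (z + 1 + h) with ((z + h) + 1) by ring. rewrite !Gamma_rec by lra. field. lra.
    apply RL_plus. apply RL_plus. apply RL_const. apply RL_mult. apply RL_id. auto.
    apply RL_mult. apply RL_const. auto. }
  pose proof (RL_unique _ _ _ HD1 HR). rewrite Hp1, Hp, H, Gamma_rec by lra. field. lra.
Qed.

Definition kf k y u := exp (- (Rpower u k) / k) * Rpower u (y - 1).
Definition phi k u := Rpower u k / k.
Definition gk k y := Rpower k (y / k - 1).

Lemma kf_eq k y u : 1 <= k -> 0 < u ->
  kf k y u = gk k y * (Rpower u (k - 1) * gf (y / k) (phi k u)).
Proof.
  intros Hk Hu. unfold kf, gk, gf, phi.
  assert (Hp : 0 < Rpower u k) by apply Rpower_pos.
  unfold Rpower at 6. rewrite ln_div, ln_Rpower by lra.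
  replace (- (Rpower u k / k)) with (- Rpower u k / k) by (field; lra).
  unfold Rpower at 2 3 4. 
  replace (exp ((y / k - 1) * ln k) * (exp ((k - 1) * ln u) * (exp (- Rpower u k / k) * exp ((y / k - 1) * (k * ln u - ln k)))))
    with (exp (- Rpower u k / k) * exp ((y / k - 1) * ln k + (k - 1) * ln u + (y / k - 1) * (k * ln u - ln k)))
    by (rewrite !exp_plus; ring).
  f_equal. f_equal. field. lra.
Qed.

Lemma kf_cont k y u : 1 <= k -> 0 < u -> continuous (kf k y) u.
Proof.
  intros Hk Hu. apply (ex_derive_continuous (K := R_AbsRing) (V := R_NormedModule)).
  unfold kf, Rpower. auto_derive. intuition lra.
Qed.

Lemma phi_small k a : 1 <= k -> 0 < a <= 1 -> 0 < phi k a <= a.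
Proof.
  intros Hk Ha. unfold phi. split. apply Rdiv_lt_0_compat. apply Rpower_pos. lra.
  assert (Rpower a k <= a).
  { unfold Rpower. rewrite <- (exp_ln a) at 2 by lra.
    assert (ln a <= 0). { destruct Ha as [Ha0 [H|H]]. left. rewrite <- ln_1. apply ln_increasing; lra. subst. rewrite ln_1. lra. }
    assert (Hk2 : k * ln a <= ln a) by nra. destruct (Rle_lt_or_eq_dec _ _ Hk2) as [L|E]. left; apply exp_increasing; auto. rewrite E; lra. }
  assert (Rpower a k / k <= Rpower a k). { unfold Rdiv. pose proof (Rpower_pos a k).
    assert (/ k <= 1). { rewrite <- Rinv_1. apply Rinv_le_contravar; lra. }
    assert (0 < / k) by (apply Rinv_0_lt_compat; lra). nra. }
  lra.
Qed.

Lemma phi_big k b : 1 <= k -> 1 <= b -> b / k <= phi k b.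
Proof.
  intros Hk Hb. unfold phi. unfold Rdiv. apply Rmult_le_compat_r. left; apply Rinv_0_lt_compat; lra.
  pose proof (Rle_Rpower b 1 k Hb Hk). rewrite Rpower_1 in H by lra. auto.
Qed.

Lemma Gamma_k_eq k y : 1 <= k -> 0 < y -> Gamma_k k y = gk k y * Gamma (y / k).
Proof.
  intros Hk Hy. assert (Hyk : 0 < y / k) by (apply Rdiv_lt_0_compat; lra).
  destruct (Gamma_IG (y / k) Hyk) as [[Ex HG] _].
  assert (Hg : 0 < gk k y) by apply Rpower_pos.
  assert (Hcv : forall a b, 0 < a -> a <= b ->
     RInt (kf k y) a b = gk k y * RInt (gf (y / k)) (phi k a) (phi k b)).
  { intros a b Ha Hab.
    rewrite <- (RInt_comp (V := R_CompleteNormedModule) (gf (y / k)) (phi k) (fun u => Rpower u (k - 1))).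
    - rewrite <- (RInt_scal (V := R_CompleteNormedModule)).
      apply RInt_ext. intros x Hx. rewrite Rmin_left, Rmax_right in Hx by lra.
      rewrite kf_eq by lra. reflexivity.
      apply (ex_RInt_continuous (V := R_CompleteNormedModule)). intros z Hz.
      rewrite Rmin_left, Rmax_right in Hz by lra.
      apply (continuous_mult (K := R_AbsRing)). apply cont_Rpower; lra.
      apply (continuous_comp (U := R_UniformSpace) (V := R_UniformSpace) (phi k) (gf (y / k))).
      apply (ex_derive_continuous (K := R_AbsRing) (V := R_NormedModule)). unfold phi, Rpower. auto_derive. lra.
      apply gf_cont. unfold phi. apply Rdiv_lt_0_compat. apply Rpower_pos. lra.
    - intros x Hx. rewrite Rmin_left, Rmax_right in Hx by lra. apply gf_cont.
      unfold phi. apply Rdiv_lt_0_compat. apply Rpower_pos. lra.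
    - intros x Hx. rewrite Rmin_left, Rmax_right in Hx by lra. split.
      + unfold phi. rewrite Rpower_m1 by lra. unfold Rpower. auto_derive. lra. field. lra.
      + apply cont_Rpower. lra. }
  assert (IGk : IG (kf k y) (gk k y * Gamma (y / k))).
  { split.
    - intros a b Ha Hab. apply (ex_RInt_continuous (V := R_CompleteNormedModule)). intros z Hz.
      rewrite Rmin_left in Hz by lra. apply kf_cont; lra.
    - intros eps He. destruct (HG (eps / gk k y)) as [a0 [b0 [Ha0 H]]].
      apply Rdiv_lt_0_compat; lra.
      exists (Rmin a0 1), (Rmax (k * b0) 1). split. apply Rmin_pos; lra.
      intros a b Ha Hb.
      pose proof (Rmin_l a0 1). pose proof (Rmin_r a0 1).
      pose proof (Rmax_l (k * b0) 1). pose proof (Rmax_r (k * b0) 1).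
      rewrite Hcv by lra.
      pose proof (phi_small k a Hk ltac:(lra)).
      assert (Hbig : b0 <= phi k b).
      { pose proof (phi_big k b Hk ltac:(lra)). assert (b0 <= b / k).
        { apply Rmult_le_reg_l with k. lra. unfold Rdiv. rewrite <- Rmult_assoc, (Rmult_comm k b), Rmult_assoc, Rinv_r, Rmult_1_r by lra. lra. }
        lra. }
      specialize (H (phi k a) (phi k b) ltac:(lra) Hbig).
      replace (gk k y * RInt (gf (y / k)) (phi k a) (phi k b) - gk k y * Gamma (y / k))
        with (gk k y * (RInt (gf (y / k)) (phi k a) (phi k b) - Gamma (y / k))) by ring.
      rewrite Rabs_mult, (Rabs_right (gk k y)) by lra.
      apply Rmult_lt_compat_l with (r := gk k y) in H; auto.
      replace (gk k y * (eps / gk k y)) with eps in H by (field; lra). auto. }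
  unfold Gamma_k. rewrite <- (IG_val _ _ IGk). reflexivity.
Qed.

Lemma gk_deriv k x : 1 <= k -> derivable_pt_lim (gk k) x (ln k / k * gk k x).
Proof.
  intros Hk. apply is_derive_Reals. unfold gk, Rpower. auto_derive. auto. replace (x * / k + - (1)) with (x / k - 1) by (unfold Rdiv; ring). field. lra.
Qed.

Lemma psi_k_eq k x : 1 <= k -> 0 < x -> psi_k k x = ln k / k + psi (x / k) / k.
Proof.
  intros Hk Hx. set (y := x / k). assert (Hy : 0 < y) by (apply Rdiv_lt_0_compat; lra).
  destruct (psi_char y Hy) as [D [HD Hp]]. destruct (Gamma_IG y Hy) as [_ Gy].
  assert (Hg : 0 < gk k x) by apply Rpower_pos.
  set (Dk := gk k x * (/ k * D) + Gamma y * (ln k / k * gk k x)).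
  assert (HR : RL (fun h => (Gamma_k k (x + h) - Gamma_k k x) / h) Dk).
  { apply (RL_ext (fun h => gk k (x + h) * (/ k * Qg y (h * / k)) + Gamma y * ((gk k (x + h) - gk k x) / h))).
    - exists 1. split. lra. intros h Hh.
      rewrite !Gamma_k_eq by lra. unfold Qg. fold y.
      replace ((x + h) / k) with (y + h * / k) by (unfold y; field; lra).
      field. split; lra.
    - apply RL_plus. apply RL_mult. apply RL_cont. apply derivable_continuous_pt.
      exists (ln k / k * gk k x). apply gk_deriv; auto.
      apply RL_mult. apply RL_const. apply RL_scale. apply Rinv_0_lt_compat; lra. auto.
      apply RL_mult. apply RL_const. apply RL_deriv. apply gk_deriv; auto. }
  unfold psi_k. rewrite (Derive_RL _ _ _ HR). rewrite Gamma_k_eq by lra. fold y.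
  rewrite Hp. unfold Dk. field. repeat split; lra.
Qed.

Lemma psi_int n : psi (INR (S n) + 1) = psi 1 + sum_f_R0 (fun i => / INR (S i)) n.
Proof.
  induction n.
  - simpl. rewrite psi_rec by lra. rewrite Rinv_1. reflexivity.
  - rewrite S_INR. rewrite psi_rec by (pose proof (pos_INR (S n)); lra).
    rewrite IHn, tech5, (S_INR (S n)). ring.
Qed.

Lemma psi_int_ge n : ln (INR (S n)) <= psi (INR (S n) + 1).
Proof.
  assert (Hm : 0 < INR (S n)) by (apply lt_0_INR; lia).
  pose proof (psi_lower (INR (S n)) (INR (S n) + 1) Hm ltac:(lra)).
  rewrite Gamma_rec in H by lra. destruct (Gamma_IG _ Hm) as [_ G].
  rewrite ln_mult in H by lra. replace (INR (S n) + 1 - INR (S n)) with 1 in H by ring. lra.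
Qed.

Lemma euler_gamma_ge : 0 <= euler_gamma + psi 1.
Proof.
  set (c := fun n : nat => sum_f_R0 (fun i => / INR (S i)) n - ln (INR (S n))).
  assert (Hlow : forall n, - psi 1 <= c n).
  { intros n. unfold c. pose proof (psi_int_ge n). rewrite psi_int in H. lra. }
  assert (Hdec : forall n, c (S n) <= c n).
  { intros n. unfold c. rewrite tech5.
    set (m := INR (S n)). assert (Hm : 0 < m) by (apply lt_0_INR; lia).
    replace (INR (S (S n))) with (m + 1) by (unfold m; rewrite (S_INR (S n)); ring).
    pose proof (exp_ineq1_le (ln m - ln (m + 1))).
    unfold Rminus in H. rewrite exp_plus, exp_Ropp, !exp_ln in H by lra.
    assert (m * / (m + 1) = 1 - / (m + 1)) by (field; lra). lra. }
  destruct (ex_finite_lim_seq_decr c (- psi 1) Hdec Hlow) as [l Hl].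
  assert (E : euler_gamma = l).
  { unfold euler_gamma. fold c. rewrite (is_lim_seq_unique _ _ Hl). reflexivity. }
  pose proof (is_lim_seq_le (fun _ => - psi 1) c (- psi 1) l Hlow (is_lim_seq_const _) Hl).
  simpl in H. lra.
Qed.

Theorem lemma3p6 (a b k alpha beta t : R) :
  0 < b -> b <= a -> 1 <= k -> 0 < alpha + beta * t ->
  (k * a * euler_gamma - b * euler_gamma) / k + b / k * ln k
  + (a - b) / (alpha + beta * t)
  + a * psi (alpha + beta * t) - b * psi_k k (alpha + beta * t) >= 0.
Proof.
  intros Hb Hab Hk Hx. set (x := alpha + beta * t) in *.
  set (y := x / k). assert (Hy : 0 < y) by (apply Rdiv_lt_0_compat; lra).
  assert (Hyx : y <= x).
  { unfold y. apply Rmult_le_reg_l with k. lra. unfold Rdiv.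
    rewrite <- Rmult_assoc, (Rmult_comm k x), Rmult_assoc, Rinv_r, Rmult_1_r by lra. nra. }
  rewrite psi_k_eq by lra. fold y.
  pose proof (psi_rec x Hx). pose proof (psi_rec y Hy).
  pose proof euler_gamma_ge.
  pose proof (psi_mono 1 (y + 1) ltac:(lra) ltac:(lra)).
  pose proof (psi_mono (y + 1) (x + 1) ltac:(lra) ltac:(lra)).
  set (G := euler_gamma) in *.
  set (A := G + psi (x + 1)). set (B := G + psi (y + 1)).
  assert (E : (k * a * G - b * G) / k + b / k * ln k + (a - b) / x + a * psi x
              - b * (ln k / k + psi y / k) = a * A - (b / k) * B).
  { unfold A, B. rewrite H, H0. unfold y. field. split; lra. }
  rewrite E.
  assert (HB : 0 <= B) by (unfold B; lra).
  assert (HAB : B <= A) by (unfold A, B; lra).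
  assert (Hbk : b / k <= a).
  { apply Rmult_le_reg_l with k. lra. unfold Rdiv.
    rewrite <- Rmult_assoc, (Rmult_comm k b), Rmult_assoc, Rinv_r, Rmult_1_r by lra. nra. }
  nra.
Qed.
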